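(* (a) Let $\mathcal P(\boldsymbol\alpha,\boldsymbol\ell)$ be a non-exceptional curvilinear polygon with $n$ vertices, and let $\sigma>0$ be a root of $F^{\mathcal P}(\boldsymbol\alpha,\boldsymbol\ell,\cdot)$. Then $\sigma$ is a quasi-eigenvalue of multiplicity two if additionally $F_{\rm odd}(\boldsymbol\alpha,\boldsymbol\ell,\sigma)=0$, and of multiplicity one otherwise. (b) Let $\mathcal P(\boldsymbol\alpha,\boldsymbol\ell)$ have exceptional angles, with exceptional boundary components $\mathcal Y_1,\dots,\mathcal Y_K$ as described in the context, $\mathcal Y_\kappa$ having angle vector $\boldsymbol\alpha^{(\kappa)}$ and length vector $\boldsymbol\ell^{(\kappa)}$. Then $\sigma\ge0$ is a quasi-eigenvalue if and only if for some $\kappa\in\{1,\dots,K\}$ it is a root of $F_{\rm even}(\boldsymbol\alpha^{(\kappa)},\boldsymbol\ell^{(\kappa)},\cdot)$ in the case $\mathcal O(\alpha_{E_{\kappa-1}})=\mathcal O(\alpha_{E_\kappa})$, respectively of $F_{\rm odd}(\boldsymbol\alpha^{(\kappa)},\boldsymbol\ell^{(\kappa)},\cdot)$ in the case $\mathcal O(\alpha_{E_{\kappa-1}})=-\mathcal O(\alpha_{E_\kappa})$. The multiplicity of a quasi-eigenvalue $\sigma>0$ equals the number of $\kappa$ for which $\sigma$ is a root of the corresponding polynomial, and the multiplicity of $\sigma=0$ is half the number of $\kappa$ for which $F_{\rm odd}$ is the corresponding polynomial.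
   Context: For $\boldsymbol\zeta\in\{\pm1\}^n$ (cyclic $\zeta_{n+1}=\zeta_1$), $\mathrm{ch}(\boldsymbol\zeta)=\{j:\zeta_j\ne\zeta_{j+1}\}$, $\mathfrak p_{\boldsymbol\zeta}(\boldsymbol\alpha)=\prod_{j\in\mathrm{ch}(\boldsymbol\zeta)}\cos(\pi^2/(2\alpha_j))$ (empty product $1$). For $\boldsymbol\alpha\in(0,\pi)^n$, $\boldsymbol\ell\in(0,\infty)^n$: $F_{\rm even}(\boldsymbol\alpha,\boldsymbol\ell,\sigma)=\sum_{\boldsymbol\zeta\in\{\pm1\}^n,\zeta_1=1}\mathfrak p_{\boldsymbol\zeta}(\boldsymbol\alpha)\cos(\boldsymbol\ell\cdot\boldsymbol\zeta\sigma)$, $F_{\rm odd}(\boldsymbol\alpha,\boldsymbol\ell,\sigma)=\sum_{\boldsymbol\zeta\in\{\pm1\}^n,\zeta_1=1}\mathfrak p_{\boldsymbol\zeta}(\boldsymbol\alpha)\sin(\boldsymbol\ell\cdot\boldsymbol\zeta\sigma)$, $F^{\mathcal P}=F_{\rm even}-\prod_{j=1}^n\sin(\pi^2/(2\alpha_j))$. A curvilinear polygon $\mathcal P(\boldsymbol\alpha,\boldsymbol\ell)$: bounded simply connected planar domain bounded by $n$ smooth arcs $I_j$ of lengths $\ell_j$, vertices $V_1,\dots,V_n$ clockwise (cyclic indices), $I_j$ from $V_{j-1}$ to $V_j$, interior angle $\alpha_j\in(0,\pi)$ at $V_j$. $\mathcal E=\{\pi/(2k)\}$, $\mathcal O(\pi/(2k))=(-1)^k$;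 non-exceptional means no $\alpha_j\in\mathcal E$. $\mathtt A(\alpha)=\begin{pmatrix}\csc\frac{\pi^2}{2\alpha}&-i\cot\frac{\pi^2}{2\alpha}\\ i\cot\frac{\pi^2}{2\alpha}&\csc\frac{\pi^2}{2\alpha}\end{pmatrix}$ ($\alpha\notin\mathcal E$), $\mathtt B(\ell,\sigma)=\operatorname{diag}(e^{i\ell\sigma},e^{-i\ell\sigma})$. Non-exceptional quasi-eigenvalues: $\sigma\ge0$ with $1$ an eigenvalue of $\mathtt T(\sigma)=\mathtt A(\alpha_n)\mathtt B(\ell_n,\sigma)\cdots\mathtt A(\alpha_1)\mathtt B(\ell_1,\sigma)$, multiplicity of $\sigma>0$ = geometric multiplicity of eigenvalue $1$. Exceptional case: exceptional vertices $V_{E_1},\dots,V_{E_K}$, $1\le E_1<\dots<E_K=n$, $E_0:=E_K$; the exceptional component $\mathcal Y_\kappa$ consists of the arcs $I_{E_{\kappa-1}+1},\dots,I_{E_\kappa}$ (mod $n$), with $\boldsymbol\ell^{(\kappa)}=(\ell_{E_{\kappa-1}+1},\dots,\ell_{E_\kappa})$ and $\boldsymbol\alpha^{(\kappa)}=(\alpha_{E_{\kappa-1}+1},\dots,\alpha_{E_\kappa})$ (last entry the exceptional angle). $\mathtt U_\kappa(\sigma)=\mathtt B(\ell_{E_\kappa},\sigma)\mathtt A(\alpha_{E_\kappa-1})\cdots\mathtt A(\alpha_{E_{\kappa-1}+1})\mathtt B(\ell_{E_{\kappa-1}+1},\sigma)$; $\mathbf X_{\rm even}=\frac1{\sqrt2}(e^{-i\pi/4},e^{i\pi/4})^T$,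 $\mathbf X_{\rm odd}=\frac1{\sqrt2}(e^{i\pi/4},e^{-i\pi/4})^T$, $\mathbf X(\alpha)=\mathbf X_{\rm even}$ if $\mathcal O(\alpha)=1$ else $\mathbf X_{\rm odd}$; $u\cdot v=u_1\bar v_1+u_2\bar v_2$. $\sigma\ge0$ is a quasi-eigenvalue iff $\mathtt U_\kappa(\sigma)\mathbf X(\alpha_{E_{\kappa-1}})\cdot\mathbf X(\alpha_{E_\kappa})=0$ for some $\kappa$; multiplicity of $\sigma>0$ = number of such $\kappa$; multiplicity of $0$ = half the number of $\kappa$ with $\mathcal O(\alpha_{E_{\kappa-1}})\ne\mathcal O(\alpha_{E_\kappa})$. *)

(* Defs.v *)
From Stdlib Require Import Reals List ClassicalEpsilon.
Import ListNotations.
Open Scope R_scope.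

Definition sumR (f : nat -> R) (m : nat) : R := fold_right Rplus 0 (map f (seq 1 m)).
Definition prodR (f : nat -> R) (m : nat) : R := fold_right Rmult 1 (map f (seq 1 m)).

Definition pdec (P : Prop) : bool := if excluded_middle_informative P then true else false.
Definition count_P (P : nat -> Prop) (K : nat) : nat :=
  length (filter (fun k => pdec (P k)) (seq 1 K)).

Fixpoint signs (m : nat) : list (list R) :=
  match m with
  | O => [ [] ]
  | S m' => flat_map (fun t => [1 :: t; (-1) :: t]) (signs m')
  end.
Definition zetas (m : nat) : list (list R) := map (cons 1) (signs (m - 1)).
(* zeta_j, 1-based *)
Definition zeta (z : list R) (j : nat) : R := nth (j - 1) z 0.
Definition nextc (m j : nat) : nat := if Nat.eqb j m then 1%nat else S j.

(* p_zeta(alpha) = prod_{j in ch(zeta)} cos(pi^2/(2 alpha_j)) *)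
Definition pz (alpha : nat -> R) (m : nat) (z : list R) : R :=
  prodR (fun j => if Req_EM_T (zeta z j) (zeta z (nextc m j)) then 1
                  else cos (PI ^ 2 / (2 * alpha j))) m.
Definition dotz (ell : nat -> R) (m : nat) (z : list R) : R :=
  sumR (fun j => ell j * zeta z j) m.

Definition F_even (m : nat) (alpha ell : nat -> R) (sigma : R) : R :=
  fold_right Rplus 0 (map (fun z => pz alpha m z * cos (dotz ell m z * sigma)) (zetas m)).
Definition F_odd (m : nat) (alpha ell : nat -> R) (sigma : R) : R :=
  fold_right Rplus 0 (map (fun z => pz alpha m z * sin (dotz ell m z * sigma)) (zetas m)).
Definition F_P (m : nat) (alpha ell : nat -> R) (sigma : R) : R :=
  F_even m alpha ell sigma - prodR (fun j => sin (PI ^ 2 / (2 * alpha j))) m.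

Definition is_exceptional (a : R) : Prop :=
  exists k : nat, (1 <= k)%nat /\ a = PI / (2 * INR k).
(* O(pi/(2k)) = (-1)^k *)
Definition O_sign (k : nat) : R := (-1) ^ k.

Definition C := (R * R)%type.
Definition RtoC (r : R) : C := (r, 0).
Definition C0 : C := (0, 0).
Definition C1 : C := (1, 0).
Definition Cadd (z w : C) : C := (fst z + fst w, snd z + snd w).
Definition Cmul (z w : C) : C :=
  (fst z * fst w - snd z * snd w, fst z * snd w + snd z * fst w).
Definition Cconj (z : C) : C := (fst z, - snd z).
Definition Cexpi (x : R) : C := (cos x, sin x).

Definition V2 := (C * C)%type.
Definition V0 : V2 := (C0, C0).
Definition Vadd (u v : V2) : V2 := (Cadd (fst u) (fst v), Cadd (snd u) (snd v)).
Definition Vscale (a : C) (v : V2) : V2 := (Cmul a (fst v), Cmul a (snd v)).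
Definition Vdot (u v : V2) : C :=
  Cadd (Cmul (fst u) (Cconj (fst v))) (Cmul (snd u) (Cconj (snd v))).

Record M2 := mkM2 { m11 : C; m12 : C; m21 : C; m22 : C }.
Definition M2id : M2 := mkM2 C1 C0 C0 C1.
Definition Mmul (A B : M2) : M2 :=
  mkM2 (Cadd (Cmul (m11 A) (m11 B)) (Cmul (m12 A) (m21 B)))
       (Cadd (Cmul (m11 A) (m12 B)) (Cmul (m12 A) (m22 B)))
       (Cadd (Cmul (m21 A) (m11 B)) (Cmul (m22 A) (m21 B)))
       (Cadd (Cmul (m21 A) (m12 B)) (Cmul (m22 A) (m22 B))).
Definition Mapply (A : M2) (v : V2) : V2 :=
  (Cadd (Cmul (m11 A) (fst v)) (Cmul (m12 A) (snd v)),
   Cadd (Cmul (m21 A) (fst v)) (Cmul (m22 A) (snd v))).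

Definition Amat (alpha : R) : M2 :=
  let t := PI ^ 2 / (2 * alpha) in
  mkM2 (RtoC (/ sin t)) (0, - (cos t / sin t)) (0, cos t / sin t) (RtoC (/ sin t)).
Definition Bmat (l sigma : R) : M2 :=
  mkM2 (Cexpi (l * sigma)) C0 C0 (Cexpi (- (l * sigma))).

(* Tprod o len = A(a_{o+len})B(l_{o+len}) ... A(a_{o+1})B(l_{o+1}) *)
Fixpoint Tprod (alpha ell : nat -> R) (o len : nat) (sigma : R) : M2 :=
  match len with
  | O => M2id
  | S k => Mmul (Mmul (Amat (alpha (o + S k)%nat)) (Bmat (ell (o + S k)%nat) sigma))
                (Tprod alpha ell o k sigma)
  end.
Definition Tmat (n : nat) (alpha ell : nat -> R) (sigma : R) : M2 :=
  Tprod alpha ell 0 n sigma.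

Definition eigvec1 (T : M2) (v : V2) : Prop := Mapply T v = v.
Definition lin_indep (v w : V2) : Prop :=
  forall a b : C, Vadd (Vscale a v) (Vscale b w) = V0 -> a = C0 /\ b = C0.
Definition geom_mult1 (T : M2) : nat :=
  if pdec (exists v w, eigvec1 T v /\ eigvec1 T w /\ lin_indep v w) then 2%nat
  else if pdec (exists v, eigvec1 T v /\ v <> V0) then 1%nat else 0%nat.

Definition is_qe_nonexc (n : nat) (alpha ell : nat -> R) (sigma : R) : Prop :=
  0 <= sigma /\ exists v, v <> V0 /\ eigvec1 (Tmat n alpha ell sigma) v.
Definition qe_mult_nonexc (n : nat) (alpha ell : nat -> R) (sigma : R) : nat :=
  geom_mult1 (Tmat n alpha ell sigma).

(* Exceptional vertices V_{E 1} < ... < V_{E K} = V_n; kexc kappa is the k with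
   alpha_{E kappa} = pi/(2k).  E_0 := E_K. *)
(* index offset of component kappa: arcs offset+1 .. E kappa  (mod n) *)
Definition offset (E : nat -> nat) (kappa : nat) : nat :=
  if Nat.eqb kappa 1 then 0%nat else E (kappa - 1)%nat.
Definition kprev (K : nat) (kexc : nat -> nat) (kappa : nat) : nat :=
  if Nat.eqb kappa 1 then kexc K else kexc (kappa - 1)%nat.

Definition X_even : V2 :=
  (Cmul (RtoC (/ sqrt 2)) (Cexpi (- (PI / 4))), Cmul (RtoC (/ sqrt 2)) (Cexpi (PI / 4))).
Definition X_odd : V2 :=
  (Cmul (RtoC (/ sqrt 2)) (Cexpi (PI / 4)), Cmul (RtoC (/ sqrt 2)) (Cexpi (- (PI / 4)))).
(* X(alpha) for alpha = pi/(2k): X_even iff O(alpha) = (-1)^k = 1 *)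
Definition Xk (k : nat) : V2 := if Nat.even k then X_even else X_odd.

(* U_kappa(sigma) = B(l_{E_kappa}) A(a_{E_kappa - 1}) ... A(a_{E_{kappa-1}+1}) B(l_{E_{kappa-1}+1}) *)
Definition Umat (alpha ell : nat -> R) (E : nat -> nat) (kappa : nat) (sigma : R) : M2 :=
  let o := offset E kappa in
  let e := E kappa in
  Mmul (Bmat (ell e) sigma) (Tprod alpha ell o (e - 1 - o) sigma).

Definition qe_cond_exc (alpha ell : nat -> R) (K : nat) (E kexc : nat -> nat)
    (kappa : nat) (sigma : R) : Prop :=
  Vdot (Mapply (Umat alpha ell E kappa sigma) (Xk (kprev K kexc kappa))) (Xk (kexc kappa)) = C0.

Definition is_qe_exc (alpha ell : nat -> R) (K : nat) (E kexc : nat -> nat) (sigma : R) : Prop :=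
  0 <= sigma /\ exists kappa, (1 <= kappa <= K)%nat /\ qe_cond_exc alpha ell K E kexc kappa sigma.

Definition qe_mult_exc (alpha ell : nat -> R) (K : nat) (E kexc : nat -> nat) (sigma : R) : nat :=
  if pdec (0 < sigma) then count_P (fun kappa => qe_cond_exc alpha ell K E kexc kappa sigma) K
  else Nat.div2 (count_P (fun kappa => O_sign (kprev K kexc kappa) <> O_sign (kexc kappa)) K).

Definition comp_len (E : nat -> nat) (kappa : nat) : nat := (E kappa - offset E kappa)%nat.
Definition comp_vec (v : nat -> R) (E : nat -> nat) (kappa : nat) : nat -> R :=
  fun i => v (offset E kappa + i)%nat.

Definition comp_root (alpha ell : nat -> R) (K : nat) (E kexc : nat -> nat)
    (kappa : nat) (sigma : R) : Prop :=
  let m := comp_len E kappa in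
  (O_sign (kprev K kexc kappa) = O_sign (kexc kappa) ->
     F_even m (comp_vec alpha E kappa) (comp_vec ell E kappa) sigma = 0) /\
  (O_sign (kprev K kexc kappa) = - O_sign (kexc kappa) ->
     F_odd m (comp_vec alpha E kappa) (comp_vec ell E kappa) sigma = 0).

(* Main.v *)
Require Import Defs.
From Stdlib Require Import Reals.
From Stdlib Require Import List Lra Lia ZArith ClassicalEpsilon.
Require Import Defs.
Import ListNotations.
Open Scope R_scope.

Definition SumL (l : list (list R)) (g : list R -> R) : R := fold_right Rplus 0 (map g l).

Lemma SumL_ext l f g : (forall z, In z l -> f z = g z) -> SumL l f = SumL l g.
Proof. induction l as [|a l IH]; intros H; simpl; auto.
 unfold SumL in *; simpl. rewrite H by (left; auto). rewrite IH; auto. intros; apply H; right; auto. Qed.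

Lemma SumL_map l h g : SumL (map h l) g = SumL l (fun z => g (h z)).
Proof. unfold SumL; rewrite map_map; auto. Qed.

Lemma SumL_app l1 l2 g : SumL (l1 ++ l2) g = SumL l1 g + SumL l2 g.
Proof. induction l1; unfold SumL in *; simpl; [ring|]. rewrite IHl1; ring. Qed.

Lemma SumL_flat_map {A} (L : list A) F g :
  SumL (flat_map F L) g = fold_right Rplus 0 (map (fun t => SumL (F t) g) L).
Proof. induction L; simpl; auto. rewrite SumL_app, IHL; auto. Qed.

Lemma SumL_lin4 l a1 a2 a3 a4 f1 f2 f3 f4 :
  SumL l (fun z => a1 * f1 z + a2 * f2 z + a3 * f3 z + a4 * f4 z) =
  a1 * SumL l f1 + a2 * SumL l f2 + a3 * SumL l f3 + a4 * SumL l f4.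
Proof. induction l; unfold SumL in *; simpl; [ring|]. rewrite IHl; ring. Qed.

Lemma SumL_lin2 l a1 a2 f1 f2 :
  SumL l (fun z => a1 * f1 z + a2 * f2 z) = a1 * SumL l f1 + a2 * SumL l f2.
Proof. induction l; unfold SumL in *; simpl; [ring|]. rewrite IHl; ring. Qed.

Definition flip (z : list R) : list R := map Ropp z.

Lemma flip_inv k (H : list R -> R) :
  SumL (signs k) (fun t => H (flip t)) = SumL (signs k) H.
Proof.
  revert H; induction k; intros H; [reflexivity|].
  simpl signs. rewrite !SumL_flat_map.
  transitivity (fold_right Rplus 0 (map (fun t => (fun u => H (-1 :: u) + (H (1 :: u) + 0)) (flip t)) (signs k))).
  - f_equal. apply map_ext. intros t. unfold SumL; simpl.
    replace (- (1)) with (-1) by ring. replace (- (-1)) with 1 by ring. reflexivity.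
  - pose proof (IHk (fun u => H (-1 :: u) + (H (1 :: u) + 0))) as E. unfold SumL in E.
    rewrite E. f_equal. apply map_ext. intros t. unfold SumL; simpl. ring.
Qed.

Lemma SumL_plus l f g : SumL l (fun z => f z + g z) = SumL l f + SumL l g.
Proof. induction l; unfold SumL in *; simpl; [ring|]. rewrite IHl; ring. Qed.

Lemma sum_zetas_S m G : (1 <= m)%nat ->
  SumL (zetas (S m)) G = SumL (zetas m) (fun z => G (1 :: z) + G (1 :: flip z)).
Proof.
  intros Hm. destruct m as [|k]; [lia|].
  unfold zetas. replace (S (S k) - 1)%nat with (S k) by lia. replace (S k - 1)%nat with k by lia.
  rewrite !SumL_map. simpl signs. rewrite SumL_flat_map.
  assert (E := flip_inv k (fun t => G (1 :: -1 :: t))).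
  rewrite SumL_plus.
  transitivity (SumL (signs k) (fun t => G (1 :: 1 :: t)) + SumL (signs k) (fun t => G (1 :: -1 :: t))).
  - rewrite <- SumL_plus. unfold SumL at 2. f_equal. apply map_ext. intros t. unfold SumL; simpl. ring.
  - rewrite <- E. reflexivity.
Qed.


Lemma prodR_S f m : prodR f (S m) = prodR f m * f (S m).
Proof. unfold prodR. rewrite seq_S, map_app, fold_right_app. simpl.
  generalize (f (S m)); intro x. induction (map f (seq 1 m)); simpl; [ring|]. rewrite IHl; ring. Qed.
Lemma sumR_S f m : sumR f (S m) = sumR f m + f (S m).
Proof. unfold sumR. rewrite seq_S, map_app, fold_right_app. simpl.
  generalize (f (S m)); intro x. induction (map f (seq 1 m)); simpl; [ring|]. rewrite IHl; ring. Qed.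
Lemma prodR_front f m : prodR f (S m) = f 1%nat * prodR (fun j => f (S j)) m.
Proof. unfold prodR. simpl. f_equal. rewrite <- seq_shift, map_map. reflexivity. Qed.
Lemma sumR_front f m : sumR f (S m) = f 1%nat + sumR (fun j => f (S j)) m.
Proof. unfold sumR. simpl. f_equal. rewrite <- seq_shift, map_map. reflexivity. Qed.
Lemma prodR_ext f g m : (forall j, (1 <= j <= m)%nat -> f j = g j) -> prodR f m = prodR g m.
Proof. intros H. induction m; auto. rewrite !prodR_S, IHm, H; [auto|lia|intros; apply H; lia]. Qed.
Lemma sumR_ext f g m : (forall j, (1 <= j <= m)%nat -> f j = g j) -> sumR f m = sumR g m.
Proof. intros H. induction m; auto. rewrite !sumR_S, IHm, H; [auto|lia|intros; apply H; lia]. Qed.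
Lemma sumR_opp f m : sumR (fun j => - f j) m = - sumR f m.
Proof. induction m. unfold sumR; simpl; ring. rewrite !sumR_S, IHm; ring. Qed.
Lemma prodR_mul f g m : prodR (fun j => f j * g j) m = prodR f m * prodR g m.
Proof. induction m. unfold prodR; simpl; ring. rewrite !prodR_S, IHm; ring. Qed.
Lemma prodR_nz f m : (forall j, (1 <= j <= m)%nat -> f j <> 0) -> prodR f m <> 0.
Proof. intros H. induction m. unfold prodR; simpl; lra. rewrite prodR_S.
  apply Rmult_integral_contrapositive_currified; [apply IHm; intros; apply H; lia| apply H; lia]. Qed.

Lemma zeta_cons1 x z : zeta (x :: z) 1 = x.
Proof. reflexivity. Qed.
Lemma zeta_consS x z j : (1 <= j)%nat -> zeta (x :: z) (S j) = zeta z j.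
Proof. intros. unfold zeta. destruct j; [lia|]. simpl. rewrite Nat.sub_0_r. reflexivity. Qed.
Lemma zeta_flip z j : zeta (flip z) j = - zeta z j.
Proof. unfold zeta, flip. generalize (j - 1)%nat. induction z; intros n; destruct n; simpl; auto; ring. Qed.

Definition chainc (c : nat -> R) (z : list R) (m : nat) : R :=
  prodR (fun j => if Req_EM_T (zeta z j) (zeta z (S j)) then 1 else c j) m.
Definition pzc (c : nat -> R) (m : nat) (z : list R) : R :=
  prodR (fun j => if Req_EM_T (zeta z j) (zeta z (nextc m j)) then 1 else c j) m.
Definition pzb (c : nat -> R) (m : nat) (z : list R) : R :=
  chainc c z (m - 1) * (if Req_EM_T (zeta z m) (zeta z 1) then c m else 1).

Lemma pzc_split c m z : pzc c (S m) z =
  chainc c z m * (if Req_EM_T (zeta z (S m)) (zeta z 1) then 1 else c (S m)).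
Proof. unfold pzc. rewrite prodR_S. f_equal.
  - apply prodR_ext. intros j Hj. unfold nextc.
    replace (Nat.eqb j (S m)) with false by (symmetry; apply Nat.eqb_neq; lia). reflexivity.
  - unfold nextc. rewrite Nat.eqb_refl. reflexivity. Qed.

Lemma chainc_flip c z m : chainc c (flip z) m = chainc c z m.
Proof. unfold chainc. apply prodR_ext. intros j _. rewrite !zeta_flip.
  destruct (Req_EM_T (- zeta z j) (- zeta z (S j))), (Req_EM_T (zeta z j) (zeta z (S j))); auto; lra. Qed.

Lemma chainc_cons c x u m : chainc c (x :: u) (S m) =
  (if Req_EM_T x (zeta u 1) then 1 else c 1%nat) * chainc (fun j => c (S j)) u m.
Proof. unfold chainc. rewrite prodR_front. f_equal. apply prodR_ext. intros j Hj.
  rewrite !zeta_consS by lia. reflexivity. Qed.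

Lemma signs_mem k t : In t (signs k) -> length t = k /\ (forall x, In x t -> x = 1 \/ x = -1).
Proof. revert t; induction k; intros t H; simpl in H.
  - destruct H as [<-|[]]. simpl; split; auto; intros _ [].
  - apply in_flat_map in H. destruct H as [u [Hu H]]. apply IHk in Hu. destruct Hu as [Hl Hx].
    simpl in H. destruct H as [<-|[<-|[]]]; simpl; (split; [lia|]); intros x [<-|Hi]; auto. Qed.

Lemma zetas_mem m z : (1 <= m)%nat -> In z (zetas m) ->
  zeta z 1 = 1 /\ length z = m /\ (forall j, (1 <= j <= m)%nat -> zeta z j = 1 \/ zeta z j = -1).
Proof. intros Hm H. unfold zetas in H. apply in_map_iff in H. destruct H as [t [<- Ht]].
  apply signs_mem in Ht. destruct Ht as [Hl Hx]. split; [reflexivity|]. split; [simpl; lia|].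
  intros j Hj. unfold zeta. assert (In (nth (j-1) (1::t) 0) (1 :: t)) as Hi by (apply nth_In; simpl; lia).
  destruct Hi as [<-|Hi]; auto. Qed.


Definition sh (f : nat -> R) : nat -> R := fun j => f (S j).

Lemma dotz_cons l x u m : dotz l (S m) (x :: u) = l 1%nat * x + dotz (sh l) m u.
Proof. unfold dotz. rewrite sumR_front. f_equal. apply sumR_ext. intros j Hj.
  unfold sh. rewrite zeta_consS by lia. reflexivity. Qed.
Lemma dotz_flip l m z : dotz l m (flip z) = - dotz l m z.
Proof. unfold dotz. rewrite <- sumR_opp. apply sumR_ext. intros j _. rewrite zeta_flip. ring. Qed.

Ltac dreq := repeat match goal with |- context [Req_EM_T ?a ?b] => destruct (Req_EM_T a b) end.

Lemma pzc_c1 c m z : (1 <= m)%nat -> In z (zetas m) -> pzc c (S m) (1 :: z) = pzc (sh c) m z.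
Proof. intros Hm Hz. destruct (zetas_mem m z Hm Hz) as [H1 _].
  destruct m as [|m']; [lia|]. rewrite !pzc_split, chainc_cons. rewrite zeta_consS by lia.
  rewrite zeta_cons1, H1. unfold sh. dreq; try lra; ring. Qed.

Lemma pzc_c2 c m z : (1 <= m)%nat -> In z (zetas m) -> pzc c (S m) (1 :: flip z) = c 1%nat * pzb (sh c) m z.
Proof. intros Hm Hz. destruct (zetas_mem m z Hm Hz) as [H1 [_ Hpm]].
  destruct m as [|m']; [lia|]. rewrite !pzc_split, chainc_cons. rewrite zeta_consS by lia.
  unfold pzb. replace (S m' - 1)%nat with m' by lia. rewrite zeta_cons1, chainc_flip, !zeta_flip, H1.
  destruct (Hpm (S m')) as [E|E]; [lia| |]; rewrite E; unfold sh; dreq; try lra; ring. Qed.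

Lemma pzb_c1 c m z : (1 <= m)%nat -> In z (zetas m) -> pzb c (S m) (1 :: z) = pzb (sh c) m z.
Proof. intros Hm Hz. destruct (zetas_mem m z Hm Hz) as [H1 _].
  destruct m as [|m']; [lia|]. unfold pzb. replace (S (S m') - 1)%nat with (S m') by lia.
  replace (S m' - 1)%nat with m' by lia.
  rewrite chainc_cons. rewrite zeta_consS by lia.
  rewrite zeta_cons1, H1. unfold sh. dreq; try lra; ring. Qed.

Lemma pzb_c2 c m z : (1 <= m)%nat -> In z (zetas m) -> pzb c (S m) (1 :: flip z) = c 1%nat * pzc (sh c) m z.
Proof. intros Hm Hz. destruct (zetas_mem m z Hm Hz) as [H1 [_ Hpm]].
  destruct m as [|m']; [lia|]. rewrite pzc_split. unfold pzb. replace (S (S m') - 1)%nat with (S m') by lia.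
  rewrite chainc_cons. rewrite zeta_consS by lia.
  rewrite zeta_cons1, chainc_flip, !zeta_flip, H1.
  destruct (Hpm (S m')) as [E|E]; [lia| |]; rewrite E; unfold sh; dreq; try lra; ring. Qed.

Definition Sa c l s m := SumL (zetas m) (fun z => pzc c m z * cos (dotz l m z * s)).
Definition Sas c l s m := SumL (zetas m) (fun z => pzc c m z * sin (dotz l m z * s)).
Definition Sb c l s m := SumL (zetas m) (fun z => pzb c m z * cos (dotz l m z * s)).
Definition Sbs c l s m := SumL (zetas m) (fun z => pzb c m z * sin (dotz l m z * s)).

Section Rec.
Variables (c l : nat -> R) (s : R) (m : nat).
Hypothesis Hm : (1 <= m)%nat.
Let t := l 1%nat * s.
Let A := Sa (sh c) (sh l) s m.
Let A' := Sas (sh c) (sh l) s m.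
Let B := Sb (sh c) (sh l) s m.
Let B' := Sbs (sh c) (sh l) s m.
Let c1 := c 1%nat.

Ltac recpf a1 a2 a3 a4 :=
  unfold A, A', B, B', Sa, Sas, Sb, Sbs;
  rewrite sum_zetas_S by exact Hm;
  rewrite <- (SumL_lin4 _ a1 a2 a3 a4);
  apply SumL_ext; intros z Hz;
  rewrite ?pzc_c1, ?pzc_c2, ?pzb_c1, ?pzb_c2 by auto;
  rewrite !dotz_cons, !dotz_flip;
  unfold t, c1;
  rewrite !Rmult_plus_distr_r, !Rmult_1_r, ?cos_plus, ?sin_plus, <- ?Ropp_mult_distr_l, ?cos_neg, ?sin_neg; ring.

Lemma Sa_rec : Sa c l s (S m) = cos t * (A + c1 * B) - sin t * (A' - c1 * B').
Proof.
  transitivity (cos t * A + (- sin t) * A' + (cos t * c1) * B + (sin t * c1) * B'); [|ring].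
  recpf (cos t) (- sin t) (cos t * c1) (sin t * c1). Qed.
Lemma Sas_rec : Sas c l s (S m) = sin t * (A + c1 * B) + cos t * (A' - c1 * B').
Proof.
  transitivity (sin t * A + (cos t) * A' + (sin t * c1) * B + (- cos t * c1) * B'); [|ring].
  recpf (sin t) (cos t) (sin t * c1) (- cos t * c1). Qed.
Lemma Sb_rec : Sb c l s (S m) = cos t * (B + c1 * A) - sin t * (B' - c1 * A').
Proof.
  transitivity ((cos t * c1) * A + (sin t * c1) * A' + cos t * B + (- sin t) * B'); [|ring].
  recpf (cos t * c1) (sin t * c1) (cos t) (- sin t). Qed.
Lemma Sbs_rec : Sbs c l s (S m) = sin t * (B + c1 * A) + cos t * (B' - c1 * A').
Proof.
  transitivity ((sin t * c1) * A + (- cos t * c1) * A' + sin t * B + (cos t) * B'); [|ring].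
  recpf (sin t * c1) (- cos t * c1) (sin t) (cos t). Qed.
End Rec.


Definition A0 (c : R) : M2 := mkM2 C1 (0, - c) (0, c) C1.
Definition Qm (c l s : R) : M2 := Mmul (A0 c) (Bmat l s).
Fixpoint Qprod (c l : nat -> R) (s : R) (m : nat) : M2 :=
  match m with O => M2id | S k => Mmul (Qm (c (S k)) (l (S k)) s) (Qprod c l s k) end.
Definition Mscale (r : R) (M : M2) : M2 :=
  mkM2 (Cmul (RtoC r) (m11 M)) (Cmul (RtoC r) (m12 M)) (Cmul (RtoC r) (m21 M)) (Cmul (RtoC r) (m22 M)).
Definition Mcore (A A' B B' : R) : M2 := mkM2 (A, A') (- B', - B) (- B', B) (A, - A').

Ltac cdes := repeat match goal with
  | M : M2 |- _ => destruct M
  | z : C |- _ => destruct z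
  | z : (R * R)%type |- _ => destruct z end.
Ltac meq := cdes; unfold Mscale, Mcore, Qm, A0, Bmat, M2id; unfold Mmul; unfold Cadd, Cmul, RtoC, C1, C0, Cexpi; simpl;
  rewrite ?cos_neg, ?sin_neg; f_equal; f_equal; ring.

Lemma Mmul_assoc (X Y Z : M2) : Mmul X (Mmul Y Z) = Mmul (Mmul X Y) Z.
Proof. meq. Qed.
Lemma Mmul_id_l X : Mmul M2id X = X.
Proof. meq. Qed.
Lemma Mmul_id_r X : Mmul X M2id = X.
Proof. meq. Qed.

Lemma Qprod_peel c l s m : Qprod c l s (S m) = Mmul (Qprod (sh c) (sh l) s m) (Qm (c 1%nat) (l 1%nat) s).
Proof. revert c l; induction m; intros c l.
  - simpl. rewrite Mmul_id_l, Mmul_id_r. reflexivity.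
  - change (Qprod c l s (S (S m))) with (Mmul (Qm (c (S (S m))) (l (S (S m))) s) (Qprod c l s (S m))).
    rewrite IHm, Mmul_assoc. reflexivity. Qed.

Lemma Qprod_ext c c' l l' s m : (forall j, (1 <= j <= m)%nat -> c j = c' j /\ l j = l' j) ->
  Qprod c l s m = Qprod c' l' s m.
Proof. induction m; intros H; simpl; auto. destruct (H (S m)) as [E1 E2]; [lia|].
  rewrite E1, E2, IHm; auto. intros; apply H; lia. Qed.

Lemma base_vals c l s :
  Sa c l s 1 = cos (l 1%nat * s) /\ Sas c l s 1 = sin (l 1%nat * s) /\
  Sb c l s 1 = c 1%nat * cos (l 1%nat * s) /\ Sbs c l s 1 = c 1%nat * sin (l 1%nat * s).
Proof.
  assert (P1 : pzc c 1 [1] = 1).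
  { rewrite pzc_split. unfold chainc, prodR; simpl. destruct (Req_EM_T _ _) as [_|n]; [ring|]. exfalso; apply n; reflexivity. }
  assert (P2 : pzb c 1 [1] = c 1%nat).
  { unfold pzb, chainc, prodR; simpl. destruct (Req_EM_T _ _) as [_|n]; [ring|]. exfalso; apply n; reflexivity. }
  assert (D : dotz l 1 [1] = l 1%nat).
  { rewrite dotz_cons. unfold dotz, sumR; simpl. ring. }
  unfold Sa, Sas, Sb, Sbs, SumL, zetas; simpl. rewrite P1, P2, D. repeat split; ring. Qed.

Lemma core c l s m : (1 <= m)%nat ->
  Qprod c l s m = Mcore (Sa c l s m) (Sas c l s m) (Sb c l s m) (Sbs c l s m).
Proof. revert c l; induction m; intros c l Hm; [lia|].
  destruct (Nat.eq_dec m 0) as [->|Hm0].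
  - destruct (base_vals c l s) as [E1 [E2 [E3 E4]]]. rewrite E1, E2, E3, E4.
    simpl. rewrite Mmul_id_r. meq.
  - rewrite Qprod_peel, IHm by lia.
    rewrite Sa_rec, Sas_rec, Sb_rec, Sbs_rec by lia. meq. Qed.


Lemma Amat_scale a : Amat a = Mscale (/ sin (PI^2/(2*a))) (A0 (cos (PI^2/(2*a)))).
Proof. unfold Amat. set (t := PI^2/(2*a)). unfold Mscale, A0, RtoC, Cmul, C1; simpl.
  f_equal; f_equal; unfold Rdiv; ring. Qed.

Lemma Tprod_rel alpha ell o m s :
  Tprod alpha ell o m s =
  Mscale (/ prodR (fun j => sin (PI^2/(2*alpha (o+j)%nat))) m)
    (Qprod (fun j => cos (PI^2/(2*alpha (o+j)%nat))) (fun j => ell (o+j)%nat) s m).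
Proof. induction m.
  - simpl. unfold prodR; simpl. rewrite Rinv_1. meq.
  - simpl Tprod. rewrite IHm, Amat_scale, prodR_S, Rinv_mult. simpl Qprod.
    generalize (Qprod (fun j : nat => cos (PI ^ 2 / (2 * alpha (o + j)%nat)))
            (fun j : nat => ell (o + j)%nat) s m). intro X. meq. Qed.

Definition Csub (z w : C) : C := (fst z - fst w, snd z - snd w).
Definition Cdet (M : M2) : C := Csub (Cmul (m11 M) (m22 M)) (Cmul (m12 M) (m21 M)).

Lemma Cdet_mul X Y : Cdet (Mmul X Y) = Cmul (Cdet X) (Cdet Y).
Proof. cdes. unfold Cdet, Csub, Mmul, Cadd, Cmul; simpl. f_equal; ring. Qed.

Lemma Cdet_Qm c l s : Cdet (Qm c l s) = (1 - c * c, 0).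
Proof. unfold Cdet, Csub, Qm, A0, Bmat; unfold Mmul; unfold Cadd, Cmul, C1, C0, Cexpi; simpl.
  rewrite cos_neg, sin_neg. assert (H := sin2_cos2 (l * s)). unfold Rsqr in H.
  f_equal.
  - transitivity ((sin (l*s) * sin (l*s) + cos (l*s) * cos (l*s)) * (1 - c*c)); [ring| rewrite H; ring].
  - ring. Qed.

Lemma Cdet_Qprod c l s m : Cdet (Qprod c l s m) = (prodR (fun j => 1 - c j * c j) m, 0).
Proof. induction m.
  - unfold Cdet, Csub, prodR; simpl. unfold Cmul, C1, C0; simpl. f_equal; ring.
  - simpl Qprod. rewrite Cdet_mul, IHm, Cdet_Qm, prodR_S. unfold Cmul; simpl. f_equal; ring. Qed.

Lemma det_rel c l s m : (1 <= m)%nat ->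
  Sa c l s m * Sa c l s m + Sas c l s m * Sas c l s m - Sb c l s m * Sb c l s m - Sbs c l s m * Sbs c l s m
  = prodR (fun j => 1 - c j * c j) m.
Proof. intros Hm. pose proof (Cdet_Qprod c l s m) as H. rewrite core in H by exact Hm.
  unfold Cdet, Csub, Mcore, Cmul in H; simpl in H. injection H as H _. rewrite <- H. ring. Qed.


Lemma eig_eqs S A' B B' p q x y : S <> 0 ->
  eigvec1 (Mscale (/S) (Mcore S A' B B')) ((p,q),(x,y)) ->
  - A' * q - B' * x + B * y = 0 /\ A' * p - B' * y - B * x = 0.
Proof. intros HS H. unfold eigvec1, Mapply, Mscale, Mcore, Cadd, Cmul, RtoC in H; simpl in H.
  injection H as H1 H2 H3 H4. set (r := / S) in *. assert (hr : r * S = 1) by (unfold r; field; auto).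
  assert (hp : r * S * p = p) by (rewrite hr; ring).
  assert (hq : r * S * q = q) by (rewrite hr; ring).
  assert (E1 : r * (- A' * q - B' * x + B * y) = 0) by (ring_simplify in H1; ring_simplify; lra).
  assert (E2 : r * (A' * p - B' * y - B * x) = 0) by (ring_simplify in H2; ring_simplify; lra).
  assert (r <> 0) by (unfold r; apply Rinv_neq_0_compat; auto).
  split; [apply Rmult_integral in E1|apply Rmult_integral in E2]; tauto. Qed.

Lemma P_eq (a b c d : R) : a = c -> b = d -> (a, b) = (c, d).
Proof. intros; subst; auto. Qed.
Lemma V_eq (a b c d : C) : a = c -> b = d -> (a, b) = (c, d).
Proof. intros; subst; auto. Qed.

Lemma alg_a S A' B B' : S <> 0 -> A' * A' = B * B + B' * B' ->
  let T := Mscale (/S) (Mcore S A' B B') in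
  (exists v, v <> V0 /\ eigvec1 T v) /\
  (A' = 0 -> geom_mult1 T = 2%nat) /\ (A' <> 0 -> geom_mult1 T = 1%nat).
Proof.
  intros HS Hd T.
  destruct (Req_dec A' 0) as [HA|HA].
  - assert (HB : B = 0) by nra. assert (HB' : B' = 0) by nra. subst.
    assert (HT : T = M2id).
    { unfold T, Mscale, Mcore, M2id, Cmul, RtoC, C1, C0; simpl. f_equal; f_equal; field; auto. }
    assert (Heig : forall v, eigvec1 M2id v).
    { intros [[a b] [c d]]. unfold eigvec1, Mapply, M2id, Cadd, Cmul, C1, C0; simpl. f_equal; f_equal; ring. }
    assert (Hli : lin_indep (C1, C0) (C0, C1)).
    { intros [a1 a2] [b1 b2] H. unfold Vadd, Vscale, Cmul, Cadd, C1, C0, V0 in H; simpl in H.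
      injection H; intros. unfold C0; split; f_equal; lra. }
    rewrite HT. split; [|split].
    + exists (C1, C0). split; [|apply Heig]. unfold V0, C1, C0. intro H; injection H; lra.
    + intros _. unfold geom_mult1, pdec. destruct (excluded_middle_informative _) as [_|n]; auto.
      exfalso; apply n. exists (C1, C0), (C0, C1). auto.
    + intros []; auto.
  - assert (Hev : eigvec1 T ((- B', - B), (0, - A'))).
    { unfold T, eigvec1, Mapply, Mscale, Mcore, Cadd, Cmul, RtoC; simpl.
      apply V_eq; apply P_eq; field_simplify; auto; try (field; auto; fail); replace (B' ^ 2 + B ^ 2 - A' ^ 2) with 0 by nra; unfold Rdiv; ring. }
    assert (Hnz : ((- B', - B), (0, - A')) <> V0).
    { unfold V0, C0; intro H; injection H; intros; lra. }
    split; [eauto|split; [intros; contradiction|intros _]].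
    unfold geom_mult1, pdec. destruct (excluded_middle_informative _) as [[v [w [Hv [Hw Hi]]]]|_].
    + exfalso. destruct v as [[p q] [x y]], w as [[p' q'] [x' y']].
      destruct (eig_eqs _ _ _ _ _ _ _ _ HS Hv) as [E1 E2].
      destruct (eig_eqs _ _ _ _ _ _ _ _ HS Hw) as [E3 E4].
      assert (Hp : p = (B * x + B' * y) / A') by (apply (Rmult_eq_reg_l A'); [replace (A' * ((B * x + B' * y) / A')) with (B * x + B' * y) by (field; auto); lra|auto]).
      assert (Hq : q = (B * y - B' * x) / A') by (apply (Rmult_eq_reg_l A'); [replace (A' * ((B * y - B' * x) / A')) with (B * y - B' * x) by (field; auto); lra|auto]).
      assert (Hp' : p' = (B * x' + B' * y') / A') by (apply (Rmult_eq_reg_l A'); [replace (A' * ((B * x' + B' * y') / A')) with (B * x' + B' * y') by (field; auto); lra|auto]).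
      assert (Hq' : q' = (B * y' - B' * x') / A') by (apply (Rmult_eq_reg_l A'); [replace (A' * ((B * y' - B' * x') / A')) with (B * y' - B' * x') by (field; auto); lra|auto]).
      subst p q p' q'.
      destruct (Hi (x', y') (- x, - y)) as [H1 H2].
      { unfold Vadd, Vscale, Cmul, Cadd, V0, C0; simpl. apply V_eq; apply P_eq; field; auto. }
      injection H1 as Hx Hy. injection H2 as Hx2 Hy2.
      assert (x = 0) by lra. assert (y = 0) by lra. subst.
      destruct (Hi C1 C0) as [H3 _].
      { unfold Vadd, Vscale, Cmul, Cadd, V0, C0, C1; simpl. apply V_eq; apply P_eq; field; auto. }
      unfold C1, C0 in H3. injection H3; lra.
    + destruct (excluded_middle_informative _) as [_|n]; auto. exfalso; apply n; eauto.
Qed.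


Lemma sin_nz a : 0 < a < PI -> ~ is_exceptional a -> sin (PI^2/(2*a)) <> 0.
Proof. intros [Ha Hb] Hne H0. apply sin_eq_0_0 in H0. destruct H0 as [k Hk].
  pose proof PI_RGT_0 as Hpi.
  assert (Hx : 0 < PI^2/(2*a)) by (apply Rdiv_lt_0_compat; nra).
  assert (Hk0 : 0 < IZR k) by (rewrite Hk in Hx; nra).
  apply lt_0_IZR in Hk0. apply Hne. exists (Z.to_nat k). split; [lia|].
  rewrite INR_IZR_INZ, Z2Nat.id by lia.
  assert (Ek : IZR k <> 0) by (apply not_0_IZR; lia).
  assert (PI^2 = IZR k * PI * (2*a)) by (rewrite <- Hk; field; lra).
  apply (Rmult_eq_reg_l (2 * IZR k)); [|lra]. field_simplify; [|lra]. nra. Qed.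

Lemma cos_kpi k : cos (INR k * PI) = (-1)^k.
Proof. induction k. simpl. rewrite Rmult_0_l, cos_0; ring.
  rewrite S_INR, <- tech_pow_Rmult, Rmult_plus_distr_r, Rmult_1_l, neg_cos, IHk. ring. Qed.

Lemma cos_exc k : (1 <= k)%nat -> cos (PI^2/(2*(PI/(2*INR k)))) = (-1)^k.
Proof. intros Hk. rewrite <- cos_kpi. f_equal. pose proof PI_RGT_0.
  assert (INR k <> 0) by (apply not_0_INR; lia). field; split; lra. Qed.

Lemma pow_parity k : (-1)^k = if Nat.even k then 1 else -1.
Proof. induction k; [reflexivity|]. rewrite <- tech_pow_Rmult, IHk, Nat.even_succ, <- Nat.negb_even.
  destruct (Nat.even k); simpl; ring. Qed.

Lemma part_a : forall (n : nat) (alpha ell : nat -> R),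
     (1 <= n)%nat ->
     (forall j, (1 <= j <= n)%nat -> 0 < alpha j < PI) ->
     (forall j, (1 <= j <= n)%nat -> 0 < ell j) ->
     (forall j, (1 <= j <= n)%nat -> ~ is_exceptional (alpha j)) ->
     forall sigma : R, 0 < sigma -> F_P n alpha ell sigma = 0 ->
       is_qe_nonexc n alpha ell sigma /\
       (F_odd n alpha ell sigma = 0 -> qe_mult_nonexc n alpha ell sigma = 2%nat) /\
       (F_odd n alpha ell sigma <> 0 -> qe_mult_nonexc n alpha ell sigma = 1%nat).
Proof.
  intros n alpha ell Hn Ha Hl Hne s Hs HF.
  set (c := fun j => cos (PI^2/(2*alpha j))).
  set (S := prodR (fun j => sin (PI^2/(2*alpha j))) n).
  assert (HT : Tmat n alpha ell s = Mscale (/ S) (Mcore (Sa c ell s n) (Sas c ell s n) (Sb c ell s n) (Sbs c ell s n))).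
  { unfold Tmat. rewrite Tprod_rel, core by exact Hn. reflexivity. }
  assert (HS : S <> 0) by (apply prodR_nz; intros; apply sin_nz; auto).
  assert (HA : Sa c ell s n = S).
  { unfold F_P in HF. change (F_even n alpha ell s) with (Sa c ell s n) in HF. unfold S; lra. }
  assert (Hd := det_rel c ell s n Hn).
  assert (Hp : prodR (fun j => 1 - c j * c j) n = S * S).
  { unfold S. rewrite <- prodR_mul. apply prodR_ext. intros j _. unfold c.
    pose proof (sin2_cos2 (PI^2/(2*alpha j))). unfold Rsqr in H. lra. }
  rewrite Hp, HA in Hd.
  rewrite HA in HT.
  destruct (alg_a S (Sas c ell s n) (Sb c ell s n) (Sbs c ell s n) HS ltac:(lra)) as [H1 [H2 H3]].
  unfold is_qe_nonexc, qe_mult_nonexc. rewrite HT.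
  change (F_odd n alpha ell s) with (Sas c ell s n).
  split; [split; [lra|]|split]; auto.

Qed.


Lemma sqrt2_sq : sqrt 2 * sqrt 2 = 2.
Proof. apply sqrt_sqrt; lra. Qed.
Lemma q2 : / sqrt 2 * / sqrt 2 = / 2.
Proof. rewrite <- Rinv_mult, sqrt2_sq. reflexivity. Qed.

Lemma Xeven_val : X_even = ((/2, - / 2), (/2, /2)).
Proof. unfold X_even, Cmul, RtoC, Cexpi; simpl. rewrite cos_neg, sin_neg, cos_PI4, sin_PI4.
  pose proof q2. unfold Rdiv. rewrite !Rmult_1_l. apply V_eq; apply P_eq; lra. Qed.
Lemma Xodd_val : X_odd = ((/2, / 2), (/2, - /2)).
Proof. unfold X_odd, Cmul, RtoC, Cexpi; simpl. rewrite cos_neg, sin_neg, cos_PI4, sin_PI4.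
  pose proof q2. unfold Rdiv. rewrite !Rmult_1_l. apply V_eq; apply P_eq; lra. Qed.

Ltac vd := rewrite ?Xeven_val, ?Xodd_val; unfold Vdot, Mapply, Mscale, Mcore, Cadd, Cmul, Cconj, RtoC; simpl;
  apply P_eq; field.

Lemma vd_ee r A A' B B' : Vdot (Mapply (Mscale r (Mcore A A' B B')) X_even) X_even = (r * (A + B), 0).
Proof. vd. Qed.
Lemma vd_oo r A A' B B' : Vdot (Mapply (Mscale r (Mcore A A' B B')) X_odd) X_odd = (r * (A - B), 0).
Proof. vd. Qed.
Lemma vd_eo r A A' B B' : Vdot (Mapply (Mscale r (Mcore A A' B B')) X_even) X_odd = (r * (A' - B'), 0).
Proof. vd. Qed.
Lemma vd_oe r A A' B B' : Vdot (Mapply (Mscale r (Mcore A A' B B')) X_odd) X_even = (r * (- (A' + B')), 0).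
Proof. vd. Qed.

Definition zero_at (c : nat -> R) (m : nat) : nat -> R := fun j => if Nat.eqb j m then 0 else c j.

Lemma lin_split c m z : (1 <= m)%nat ->
  pzc c m z = pzc (zero_at c m) m z + c m * pzb (zero_at c m) m z.
Proof. intros Hm. destruct m as [|m']; [lia|]. rewrite !pzc_split. unfold pzb.
  replace (S m' - 1)%nat with m' by lia.
  assert (Ech : chainc c z m' = chainc (zero_at c (S m')) z m').
  { unfold chainc. apply prodR_ext. intros j Hj. unfold zero_at.
    replace (Nat.eqb j (S m')) with false by (symmetry; apply Nat.eqb_neq; lia). reflexivity. }
  assert (Z : zero_at c (S m') (S m') = 0) by (unfold zero_at; rewrite Nat.eqb_refl; reflexivity).
  rewrite Ech, Z. dreq; ring. Qed.

Lemma Sa_split c l s m : (1 <= m)%nat ->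
  Sa c l s m = Sa (zero_at c m) l s m + c m * Sb (zero_at c m) l s m.
Proof. intros Hm. transitivity (1 * Sa (zero_at c m) l s m + c m * Sb (zero_at c m) l s m); [|ring].
  unfold Sa, Sb. rewrite <- SumL_lin2. apply SumL_ext. intros z _. rewrite lin_split by exact Hm. ring. Qed.
Lemma Sas_split c l s m : (1 <= m)%nat ->
  Sas c l s m = Sas (zero_at c m) l s m + c m * Sbs (zero_at c m) l s m.
Proof. intros Hm. transitivity (1 * Sas (zero_at c m) l s m + c m * Sbs (zero_at c m) l s m); [|ring].
  unfold Sas, Sbs. rewrite <- SumL_lin2. apply SumL_ext. intros z _. rewrite lin_split by exact Hm. ring. Qed.

Lemma Umat_rel alpha ell E kappa s :
  let o := offset E kappa in let m := (E kappa - o)%nat in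
  (o < E kappa)%nat ->
  Umat alpha ell E kappa s =
  Mscale (/ prodR (fun j => sin (PI^2/(2*alpha (o+j)%nat))) (m - 1))
    (Qprod (zero_at (fun j => cos (PI^2/(2*alpha (o+j)%nat))) m) (fun j => ell (o+j)%nat) s m).
Proof. intros o m Ho. unfold Umat. fold o. replace (E kappa - 1 - o)%nat with (m - 1)%nat by (unfold m; lia).
  rewrite Tprod_rel.
  set (c := fun j => cos (PI^2/(2*alpha (o+j)%nat))). set (l := fun j => ell (o+j)%nat).
  assert (EQ : Qprod (zero_at c m) l s m = Mmul (Qm 0 (ell (E kappa)) s) (Qprod c l s (m - 1))).
  { assert (Hm1 : (1 <= m)%nat) by (unfold m; lia). assert (Hom : (o + m)%nat = E kappa) by (unfold m; lia).
    clearbody m. destruct m as [|m']; [lia|]. replace (S m' - 1)%nat with m' by lia. simpl Qprod.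
    unfold zero_at at 1. rewrite Nat.eqb_refl.
    replace (l (S m')) with (ell (E kappa)) by (unfold l; rewrite Hom; reflexivity).
    f_equal. apply Qprod_ext. intros j Hj. split; auto. unfold zero_at.
    replace (Nat.eqb j (S m')) with false by (symmetry; apply Nat.eqb_neq; lia). reflexivity. }
  rewrite EQ. generalize (Qprod c l s (m - 1)). intro X. meq. Qed.


Lemma E_lt (K : nat) (E : nat -> nat) :
  (forall kappa, (1 <= kappa < K)%nat -> (E kappa < E (S kappa))%nat) ->
  forall a b, (1 <= a)%nat -> (a < b)%nat -> (b <= K)%nat -> (E a < E b)%nat.
Proof. intros H a b Ha Hab HbK. induction b; [lia|].
  destruct (Nat.eq_dec a b) as [->|Hne]; [apply H; lia|].
  specialize (IHb ltac:(lia) ltac:(lia)). specialize (H b ltac:(lia)). lia. Qed.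

Lemma count_P_ext P Q K : (forall k, (1 <= k <= K)%nat -> (P k <-> Q k)) -> count_P P K = count_P Q K.
Proof. intros H. unfold count_P. f_equal. apply filter_ext_in. intros k Hk. apply in_seq in Hk.
  unfold pdec. destruct (excluded_middle_informative (P k)), (excluded_middle_informative (Q k)); auto;
  exfalso; [apply n|apply n]; apply H; auto; lia. Qed.

Lemma C0_iff r x : r <> 0 -> ((r * x, 0) = C0 <-> x = 0).
Proof. intros Hr. unfold C0. split.
  - intros H. injection H as H. apply Rmult_integral in H. tauto.
  - intros ->. f_equal; ring. Qed.

Lemma O_sign_val k : O_sign k = if Nat.even k then 1 else -1.
Proof. unfold O_sign. apply pow_parity. Qed.

Section PartB.
Variables (n : nat) (alpha ell : nat -> R) (K : nat) (E kexc : nat -> nat).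
Hypotheses (Ha : forall j, (1 <= j <= n)%nat -> 0 < alpha j < PI)
  (HK : (1 <= K)%nat) (HE1 : (1 <= E 1%nat)%nat)
  (Hmono : forall kappa, (1 <= kappa < K)%nat -> (E kappa < E (S kappa))%nat)
  (HEK : E K = n)
  (Hexc : forall j, (1 <= j <= n)%nat ->
        (is_exceptional (alpha j) <-> exists kappa, (1 <= kappa <= K)%nat /\ E kappa = j))
  (Hk : forall kappa, (1 <= kappa <= K)%nat ->
        (1 <= kexc kappa)%nat /\ alpha (E kappa) = PI / (2 * INR (kexc kappa))).

Lemma cond_equiv kappa s : (1 <= kappa <= K)%nat ->
  (qe_cond_exc alpha ell K E kexc kappa s <-> comp_root alpha ell K E kexc kappa s).
Proof.
  intros Hkap.
  set (o := offset E kappa). set (m := (E kappa - o)%nat).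
  assert (Ho : (o < E kappa)%nat /\ (kappa <> 1%nat -> o = E (kappa - 1)%nat)).
  { unfold o, offset. destruct (Nat.eqb_spec kappa 1) as [->|Hne]; [split; [lia| intros []; auto]|].
    split; [|auto]. replace (E kappa) with (E (S (kappa - 1))) by (f_equal; lia). apply Hmono; lia. }
  destruct Ho as [Ho Ho'].
  assert (HEn : (E kappa <= n)%nat).
  { destruct (Nat.eq_dec kappa K) as [-> |]; [lia|]. rewrite <- HEK. apply Nat.lt_le_incl. apply (E_lt K); auto; lia. }
  assert (Hint : forall j, (1 <= j <= m - 1)%nat -> 0 < alpha (o + j)%nat < PI /\ ~ is_exceptional (alpha (o + j)%nat)).
  { intros j Hj. split; [apply Ha; unfold m in Hj; lia|]. rewrite Hexc by (unfold m in Hj; lia).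
    intros [k' [Hk' Ek']].
    destruct (lt_eq_lt_dec k' kappa) as [[Hlt| ->]|Hgt].
    - assert (kappa <> 1%nat) by lia. specialize (Ho' H).
      destruct (Nat.eq_dec k' (kappa - 1)) as [->|Hne]; [lia|].
      assert (E k' < E (kappa - 1))%nat by (apply (E_lt K); auto; lia). lia.
    - unfold m in Hj. lia.
    - assert (E kappa < E k')%nat by (apply (E_lt K); auto; lia). unfold m in Hj. lia. }
  set (S := prodR (fun j => sin (PI^2/(2*alpha (o+j)%nat))) (m - 1)).
  assert (HS : S <> 0) by (apply prodR_nz; intros j Hj; destruct (Hint j Hj); apply sin_nz; auto).
  assert (Hr : / S <> 0) by (apply Rinv_neq_0_compat; auto).
  set (c := fun j => cos (PI^2/(2*alpha (o+j)%nat))). set (l := fun j => ell (o+j)%nat).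
  assert (Hm1 : (1 <= m)%nat) by (unfold m; lia).
  assert (HU : Umat alpha ell E kappa s = Mscale (/ S)
     (Mcore (Sa (zero_at c m) l s m) (Sas (zero_at c m) l s m) (Sb (zero_at c m) l s m) (Sbs (zero_at c m) l s m))).
  { rewrite Umat_rel by exact Ho. rewrite core by exact Hm1. reflexivity. }
  assert (Hcm : c m = O_sign (kexc kappa)).
  { unfold c. replace (o + m)%nat with (E kappa) by (unfold m; lia). destruct (Hk kappa Hkap) as [Hk1 Ha'].
    rewrite Ha'. apply cos_exc; auto. }
  unfold qe_cond_exc, comp_root. rewrite HU.
  change (comp_len E kappa) with m.
  change (F_even m (comp_vec alpha E kappa) (comp_vec ell E kappa) s) with (Sa c l s m).
  change (F_odd m (comp_vec alpha E kappa) (comp_vec ell E kappa) s) with (Sas c l s m).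
  rewrite (Sa_split c l s m Hm1), (Sas_split c l s m Hm1), Hcm.
  rewrite !O_sign_val. unfold Xk.
  destruct (Nat.even (kprev K kexc kappa)), (Nat.even (kexc kappa)).
  - rewrite vd_ee, C0_iff by exact Hr. split; [intros; split; intros; lra| intros [H1 _]; specialize (H1 eq_refl); lra].
  - rewrite vd_eo, C0_iff by exact Hr. split; [intros; split; intros; lra| intros [_ H1]; lra].
  - rewrite vd_oe, C0_iff by exact Hr. split; [intros; split; intros; lra| intros [_ H1]; lra].
  - rewrite vd_oo, C0_iff by exact Hr. split; [intros; split; intros; lra| intros [H1 _]; specialize (H1 eq_refl); lra].
Qed.

Lemma part_b_core :
     (forall sigma : R, 0 <= sigma ->
        (is_qe_exc alpha ell K E kexc sigma <->
         exists kappa, (1 <= kappa <= K)%nat /\ comp_root alpha ell K E kexc kappa sigma)) /\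
     (forall sigma : R, 0 < sigma -> is_qe_exc alpha ell K E kexc sigma ->
        qe_mult_exc alpha ell K E kexc sigma =
        count_P (fun kappa => comp_root alpha ell K E kexc kappa sigma) K) /\
     qe_mult_exc alpha ell K E kexc 0 =
       Nat.div2 (count_P (fun kappa =>
          O_sign (kprev K kexc kappa) = - O_sign (kexc kappa)) K).
Proof.
  split; [|split].
  - intros s Hs. unfold is_qe_exc. split.
    + intros [_ [k [Hk1 Hc]]]. exists k. split; auto. apply cond_equiv; auto.
    + intros [k [Hk1 Hc]]. split; auto. exists k. split; auto. apply cond_equiv; auto.
  - intros s Hs _. unfold qe_mult_exc, pdec. destruct (excluded_middle_informative (0 < s)); [|lra].
    apply count_P_ext. intros; apply cond_equiv; auto.
  - unfold qe_mult_exc, pdec. destruct (excluded_middle_informative (0 < 0)); [lra|].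
    f_equal. apply count_P_ext. intros k _. rewrite !O_sign_val.
    destruct (Nat.even (kprev K kexc k)), (Nat.even (kexc k)); split; intros; lra.
Qed.
End PartB.

Theorem theorem2p12 :
  (* (a) non-exceptional polygons *)
  (forall (n : nat) (alpha ell : nat -> R),
     (1 <= n)%nat ->
     (forall j, (1 <= j <= n)%nat -> 0 < alpha j < PI) ->
     (forall j, (1 <= j <= n)%nat -> 0 < ell j) ->
     (forall j, (1 <= j <= n)%nat -> ~ is_exceptional (alpha j)) ->
     forall sigma : R, 0 < sigma -> F_P n alpha ell sigma = 0 ->
       is_qe_nonexc n alpha ell sigma /\
       (F_odd n alpha ell sigma = 0 -> qe_mult_nonexc n alpha ell sigma = 2%nat) /\
       (F_odd n alpha ell sigma <> 0 -> qe_mult_nonexc n alpha ell sigma = 1%nat))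
  /\
  (* (b) polygons with exceptional angles *)
  (forall (n : nat) (alpha ell : nat -> R) (K : nat) (E kexc : nat -> nat),
     (1 <= n)%nat ->
     (forall j, (1 <= j <= n)%nat -> 0 < alpha j < PI) ->
     (forall j, (1 <= j <= n)%nat -> 0 < ell j) ->
     (1 <= K)%nat ->
     (1 <= E 1%nat)%nat ->
     (forall kappa, (1 <= kappa < K)%nat -> (E kappa < E (S kappa))%nat) ->
     E K = n ->
     (forall j, (1 <= j <= n)%nat ->
        (is_exceptional (alpha j) <-> exists kappa, (1 <= kappa <= K)%nat /\ E kappa = j)) ->
     (forall kappa, (1 <= kappa <= K)%nat ->
        (1 <= kexc kappa)%nat /\ alpha (E kappa) = PI / (2 * INR (kexc kappa))) ->
     (forall sigma : R, 0 <= sigma ->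
        (is_qe_exc alpha ell K E kexc sigma <->
         exists kappa, (1 <= kappa <= K)%nat /\ comp_root alpha ell K E kexc kappa sigma)) /\
     (forall sigma : R, 0 < sigma -> is_qe_exc alpha ell K E kexc sigma ->
        qe_mult_exc alpha ell K E kexc sigma =
        count_P (fun kappa => comp_root alpha ell K E kexc kappa sigma) K) /\
     qe_mult_exc alpha ell K E kexc 0 =
       Nat.div2 (count_P (fun kappa =>
          O_sign (kprev K kexc kappa) = - O_sign (kexc kappa)) K)).
Proof.
  split.
  - exact part_a.
  - intros n alpha ell K E kexc Hn Ha Hl HK HE1 Hmono HEK Hexc Hk.
    apply (part_b_core n alpha ell K E kexc); assumption.
Qed.
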